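(* Let $A,B$ be elementary algebras. The vector space $A\otimes_k B$ with the bilinear multiplication determined by $$(a\otimes b)\cdot(a'\otimes b')=aa'\otimes b_1b'+aa'_1\otimes b_2b'=aa'\otimes bb'-aa'_2\otimes b_2b'\qquad(a,a'\in A,\ b,b'\in B)$$ is an associative unital $k$-algebra (with unit $1\otimes 1$).
   Context: $k$ is a field; algebras are finite-dimensional associative unital $k$-algebras. An algebra is elementary if all its simple modules are one-dimensional. For an elementary algebra $A$, $\mathrm{rad}(A)$ is its Jacobson radical and $\bar A$ is a fixed subalgebra of $A$ with $A=\bar A\oplus\mathrm{rad}(A)$ as vector spaces (so $\bar A\cong A/\mathrm{rad}(A)$ is a product of copies of $k$; e.g. the span of the trivial paths when $A$ is given by a quiver with relations). For $a\in A$ write $a=a_1+a_2$ with $a_1\in\bar A$, $a_2\in\mathrm{rad}(A)$; similarly $b=b_1+b_2$ for $b\in B$. This algebra is called the trivially twisted tensor product and denoted $A\otimes_0 B$. *)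

(* Defs.v *)
From HB Require Import structures.
From mathcomp Require Import all_boot all_order all_algebra all_field.
Set Implicit Arguments. Unset Strict Implicit. Unset Printing Implicit Defensive.
Import GRing.Theory.
Local Open Scope ring_scope.

(* A finite-dimensional (right) A-module of dimension n, given as a unital
   algebra representation rho : A -> 'M[K]_n acting on row vectors
   (v . a := v *m rho a). *)
Definition is_rep (K : fieldType) (A : falgType K) (n : nat)
    (rho : A -> 'M[K]_n) : Prop :=
  linear rho /\ rho 1 = 1%:M /\ (forall x y, rho (x * y) = rho x *m rho y).

Definition simple_rep (K : fieldType) (A : falgType K) (n : nat)
    (rho : A -> 'M[K]_n) : Prop :=
  is_rep rho /\ (0 < n)%N /\
  (forall U : 'M[K]_n, (forall a, stablemx U (rho a)) ->
     U = 0 \/ row_full U).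

Definition jrad (K : fieldType) (A : falgType K) (x : A) : Prop :=
  forall (n : nat) (rho : A -> 'M[K]_n), simple_rep rho -> rho x = 0.

Definition elementary (K : fieldType) (A : falgType K) : Prop :=
  forall (n : nat) (rho : A -> 'M[K]_n), simple_rep rho -> n = 1%N.

(* Concrete model of A (x)_k B: matrices of coordinates w.r.t. fixed bases. *)
Definition tensT (K : fieldType) (A B : falgType K) :=
  'M[K]_(\dim (fullv : {vspace A}), \dim (fullv : {vspace B})).

Definition tens (K : fieldType) (A B : falgType K) (a : A) (b : B) : tensT A B :=
  \matrix_(i, j) (coord (vbasis fullv) i a * coord (vbasis fullv) j b).

(* Main.v *)
Require Import Defs.
From HB Require Import structures.
From mathcomp Require Import all_boot all_order all_algebra all_field.
Import GRing.Theory.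
Local Open Scope ring_scope.


Section Lin.
Variables (K : fieldType) (U W : lmodType K) (f : U -> W) (hf : linear f).
Lemma linD x y : f (x + y) = f x + f y.
Proof. by rewrite -[x in LHS]scale1r hf scale1r. Qed.
Lemma lin0 : f 0 = 0.
Proof.
have h : f 0 + f 0 = f 0 + 0 by rewrite addr0 -{3}(addr0 0) -{3}(scale1r 0) hf scale1r.
exact: (addrI _ h).
Qed.
Lemma linZ c x : f (c *: x) = c *: f x.
Proof. by rewrite -[_ *: x]addr0 hf lin0 addr0. Qed.
Lemma lin_sum I (r : seq I) (P : pred I) F :
  f (\sum_(i <- r | P i) F i) = \sum_(i <- r | P i) f (F i).
Proof. exact: (big_morph f linD lin0). Qed.
End Lin.

Lemma expand (K : fieldType) (V : vectType K) (W : lmodType K) (f : V -> W)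
  (hf : linear f) v :
  f v = \sum_(i < \dim (fullv : {vspace V})) coord (vbasis fullv) i v *: f (vbasis fullv)`_i.
Proof.
rewrite {1}(coord_vbasis (memvf v)) lin_sum //; apply: eq_bigr => i _; exact: linZ.
Qed.

Section Tens.
Variables (K : fieldType) (A B : falgType K).
Lemma tensDl (x y : A) (b : B) : tens (x + y) b = tens x b + tens y b.
Proof. by apply/matrixP => i j; rewrite !mxE linearD /= mulrDl. Qed.
Lemma tensZl c (x : A) (b : B) : tens (c *: x) b = c *: tens x b.
Proof. by apply/matrixP => i j; rewrite !mxE linearZ /= mulrA. Qed.
Lemma tensBl (x y : A) (b : B) : tens (x - y) b = tens x b - tens y b.
Proof. by apply/matrixP => i j; rewrite !mxE linearB /= mulrBl. Qed.
Lemma tensDr (a : A) (x y : B) : tens a (x + y) = tens a x + tens a y.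
Proof. by apply/matrixP => i j; rewrite !mxE linearD /= mulrDr. Qed.
Lemma tensZr c (a : A) (x : B) : tens a (c *: x) = c *: tens a x.
Proof. by apply/matrixP => i j; rewrite !mxE linearZ /= mulrCA. Qed.
Lemma tensBr (a : A) (x y : B) : tens a (x - y) = tens a x - tens a y.
Proof. by apply/matrixP => i j; rewrite !mxE linearB /= mulrBr. Qed.
Lemma tens0r (a : A) : tens a (0 : B) = 0.
Proof. by apply/matrixP => i j; rewrite !mxE linear0 mulr0. Qed.
Lemma tens_delta (i : 'I_(\dim (fullv : {vspace A}))) (j : 'I_(\dim (fullv : {vspace B}))) :
  tens ((vbasis (fullv : {vspace A}))`_i) ((vbasis (fullv : {vspace B}))`_j) = delta_mx i j.
Proof.
apply/matrixP => i' j'; rewrite !mxE !coord_free ?(basis_free (vbasisP fullv)) //.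
by rewrite -natrM mulnb eq_sym [j == _]eq_sym.
Qed.
End Tens.
Section Ext.
Variables (K : fieldType) (A B : falgType K) (W : lmodType K).
Lemma tens_ext (f g : tensT A B -> W) : linear f -> linear g ->
  (forall a b, f (tens a b) = g (tens a b)) -> forall X, f X = g X.
Proof.
move=> hf hg h X; rewrite (matrix_sum_delta X) !lin_sum //.
apply: eq_bigr => i _; rewrite !lin_sum //; apply: eq_bigr => j _.
by rewrite !linZ // -tens_delta h.
Qed.

Lemma expand2 (g : A -> B -> W) (hg1 : forall y, linear (g^~ y))
  (hg2 : forall x, linear (g x)) a b :
  \sum_(i < \dim (fullv : {vspace A})) \sum_(j < \dim (fullv : {vspace B}))
     (coord (vbasis fullv) i a * coord (vbasis fullv) j b) *:
       g (vbasis fullv)`_i (vbasis fullv)`_j = g a b.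
Proof.
rewrite (@expand _ _ _ _ (hg1 b) a); apply: eq_bigr => i _.
rewrite (@expand _ _ _ _ (hg2 _) b) scaler_sumr; apply: eq_bigr => j _.
by rewrite scalerA.
Qed.
End Ext.

Section Proj.
Variables (K : fieldType) (A : falgType K) (Ab : {aspace A}) (R : {vspace A}).
Hypothesis hR : forall x y : A, x \in R -> (x * y \in R) /\ (y * x \in R).
Hypothesis hsum : (Ab + R = fullv)%VS.
Hypothesis hcap : (Ab :&: R = 0)%VS.
Lemma pq_add x : daddv_pi Ab R x + daddv_pi R Ab x = x.
Proof. apply: daddv_pi_add => //. rewrite hsum. exact: memvf. Qed.
Lemma q_eq x : daddv_pi R Ab x = x - daddv_pi Ab R x.
Proof. by rewrite -{2}(pq_add x) addrC addKr. Qed.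
Lemma p_R u : u \in R -> daddv_pi Ab R u = 0.
Proof.
move=> uR; have h := pq_add u.
have h2 : daddv_pi R Ab u = u by apply: daddv_pi_id => //; rewrite capvC.
rewrite h2 in h.
by apply: (@addIr _ u); rewrite h add0r.
Qed.
Lemma p_q x : daddv_pi Ab R (daddv_pi R Ab x) = 0.
Proof. exact/p_R/memv_pi. Qed.
Lemma p_p x : daddv_pi Ab R (daddv_pi Ab R x) = daddv_pi Ab R x.
Proof. exact: daddv_pi_proj. Qed.
End Proj.
Lemma p_mul (K : fieldType) (A : falgType K) (Ab : {aspace A}) (R : {vspace A})
 (hR : forall x y : A, x \in R -> (x * y \in R) /\ (y * x \in R))
 (hsum : (Ab + R = fullv)%VS) (hcap : (Ab :&: R = 0)%VS) x y :
 daddv_pi Ab R (x * y) = daddv_pi Ab R x * daddv_pi Ab R y.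
Proof.
set p := daddv_pi Ab R; set q := daddv_pi R Ab.
have ex : x * y = p x * p y + (p x * q y + q x * y).
  by rewrite addrA -mulrDr pq_add // -mulrDl pq_add.
have hRs : p x * q y + q x * y \in R.
  apply: rpredD; [have [_ h] := hR (q y) (p x) (memv_pi R Ab y) | have [h _] := hR (q x) y (memv_pi R Ab x)]; exact: h.
rewrite ex linearD /= (@p_R _ _ _ _ hsum hcap _ hRs) addr0.
by rewrite daddv_pi_id // memvM // memv_pi.
Qed.
Theorem mainTheorem3 (K : fieldType) (A B : falgType K)
    (Abar : {aspace A}) (RA : {vspace A})
    (Bbar : {aspace B}) (RB : {vspace B}) :
  elementary A -> elementary B ->
  (forall x : A, x \in RA <-> jrad x) ->
  (forall y : B, y \in RB <-> jrad y) ->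
  (1 : A) \in (Abar : {vspace A}) -> (1 : B) \in (Bbar : {vspace B}) ->
  (Abar + RA = fullv)%VS -> (Abar :&: RA = 0)%VS ->
  (Bbar + RB = fullv)%VS -> (Bbar :&: RB = 0)%VS ->
  let a1 := daddv_pi Abar RA in let a2 := daddv_pi RA Abar in
  let b1 := daddv_pi Bbar RB in let b2 := daddv_pi RB Bbar in
  exists mu : tensT A B -> tensT A B -> tensT A B,
    (forall X, linear (mu X)) /\ (forall Y, linear (fun X => mu X Y)) /\
    (forall (a a' : A) (b b' : B),
        mu (tens a b) (tens a' b')
        = tens (a * a') (b1 b * b') + tens (a * a1 a') (b2 b * b')) /\
    (forall (a a' : A) (b b' : B),
        mu (tens a b) (tens a' b')
        = tens (a * a') (b * b') - tens (a * a2 a') (b2 b * b')) /\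
    associative mu /\
    left_id (tens (1 : A) (1 : B)) mu /\ right_id (tens (1 : A) (1 : B)) mu.
Proof.
move=> _ _ hRA hRB h1A h1B sA cA sB cB a1 a2 b1 b2.
have idA : forall x y : A, x \in RA -> (x * y \in RA) /\ (y * x \in RA).
  move=> x y /hRA jx; split; apply/hRA => n rho hr; have := jx n rho hr;
  case: hr => [[_ [_ hm]] _]; rewrite hm => ->; by rewrite ?mul0mx ?mulmx0.
have idB : forall x y : B, x \in RB -> (x * y \in RB) /\ (y * x \in RB).
  move=> x y /hRB jx; split; apply/hRB => n rho hr; have := jx n rho hr;
  case: hr => [[_ [_ hm]] _]; rewrite hm => ->; by rewrite ?mul0mx ?mulmx0.
pose eA := vbasis (fullv : {vspace A}).
pose eB := vbasis (fullv : {vspace B}).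
pose m (a : A) (b : B) (a' : A) (b' : B) : tensT A B :=
  tens (a * a') (b1 b * b') + tens (a * a1 a') (b2 b * b').
have mL1 b a' b' : linear (fun a => m a b a' b').
  move=> c u v /=; rewrite /m !mulrDl -!scalerAl !tensDl !tensZl.
  by rewrite scalerDr addrACA.
have mL2 a a' b' : linear (fun b => m a b a' b').
  move=> c u v /=; rewrite /m !linearP !mulrDl -!scalerAl !tensDr !tensZr.
  by rewrite scalerDr addrACA.
have mL3 a b b' : linear (fun a' => m a b a' b').
  move=> c u v /=; rewrite /m !linearP !mulrDr -!scalerAr !tensDl !tensZl.
  by rewrite scalerDr addrACA.
have mL4 a b a' : linear (fun b' => m a b a' b').
  move=> c u v /=; rewrite /m !mulrDr -!scalerAr !tensDr !tensZr.
  by rewrite scalerDr addrACA.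
pose mu (X Y : tensT A B) : tensT A B :=
  \sum_i \sum_j X i j *: (\sum_k \sum_l Y k l *: m eA`_i eB`_j eA`_k eB`_l).
have muT a b a' b' : mu (tens a b) (tens a' b') = m a b a' b'.
  have inner x y : \sum_k \sum_l (tens a' b') k l *: m x y eA`_k eB`_l = m x y a' b'.
    rewrite -(@expand2 _ _ _ _ (m x y) (fun y' => mL3 x y y') (mL4 x y) a' b').
    by apply: eq_bigr => k _; apply: eq_bigr => l _; rewrite mxE.
  rewrite /mu -(@expand2 _ _ _ _ (fun x y => m x y a' b') (fun y' => mL1 y' a' b') (fun x => mL2 x a' b') a b).
  by apply: eq_bigr => i _; apply: eq_bigr => j _; rewrite inner mxE.
have muR X : linear (mu X).
  move=> c Y Z; rewrite /mu scaler_sumr -big_split; apply: eq_bigr => i _.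
  rewrite scaler_sumr -big_split; apply: eq_bigr => j _.
  rewrite scalerA [c * _]mulrC -scalerA /=. rewrite -scalerDr; congr (_ *: _).
  rewrite scaler_sumr -big_split; apply: eq_bigr => k _.
  rewrite scaler_sumr -big_split; apply: eq_bigr => l _.
  by rewrite !mxE scalerDl scalerA.
have muL Y : linear (fun X => mu X Y).
  move=> c X Z /=; rewrite /mu scaler_sumr -big_split; apply: eq_bigr => i _.
  rewrite scaler_sumr -big_split; apply: eq_bigr => j _.
  by rewrite !mxE scalerDl scalerA.
have b1M x y : b1 (x * y) = b1 x * b1 y by apply: p_mul.
have a1M x y : a1 (x * y) = a1 x * a1 y by apply: p_mul.
have b12 x : b1 x + b2 x = x by apply: pq_add.
have a12 x : a1 x + a2 x = x by apply: pq_add.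
have b1b2 x : b1 (b2 x) = 0 by apply: p_q.
have b1b1 x : b1 (b1 x) = b1 x by apply: p_p.
have a1a1 x : a1 (a1 x) = a1 x by apply: p_p.
have b2E x : b2 x = x - b1 x by apply: q_eq.
have a2E x : a2 x = x - a1 x by apply: q_eq.
have muDl Y X X' : mu (X + X') Y = mu X Y + mu X' Y := @linD _ _ _ _ (muL Y) X X'.
have muZl Y c X : mu (c *: X) Y = c *: mu X Y := @linZ _ _ _ _ (muL Y) c X.
have muDr X Y Y' : mu X (Y + Y') = mu X Y + mu X Y' := @linD _ _ _ _ (muR X) Y Y'.
have muZr X c Y : mu X (c *: Y) = c *: mu X Y := @linZ _ _ _ _ (muR X) c Y.
exists mu; split; first exact: muR.
split; first exact: muL.
split; first by move=> *; rewrite muT.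
split.
  move=> a a' b b'; rewrite muT /m.
  rewrite -[b in tens _ (b * b')](b12 b) mulrDl tensDr a2E mulrBr tensBl.
  rewrite opprB -addrA; congr (_ + _); by rewrite addrC subrK.
split.
  have H3 a b a' b' a'' b'' : mu (tens a b) (mu (tens a' b') (tens a'' b''))
     = mu (mu (tens a b) (tens a' b')) (tens a'' b'').
    rewrite !muT /m muDr muDl !muT /m.
    have f1 : b1 (b1 b * b') = b1 b * b1 b' by rewrite b1M b1b1.
    have f2 : b2 (b1 b * b') = b1 b * b2 b' by rewrite !b2E b1M b1b1 mulrBr.
    have f3 : b1 (b2 b * b') = 0 by rewrite b1M b1b2 mul0r.
    have f4 : b2 (b2 b * b') = b2 b * b' by rewrite b2E b1M b1b2 mul0r subr0.
    rewrite f1 f2 f3 f4 mul0r tens0r add0r !a1M a1a1 !mulrA.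
    rewrite addrACA -tensDr -mulrDl -mulrDr b12 //.
  have H2 a b a' b' Z : mu (tens a b) (mu (tens a' b') Z) = mu (mu (tens a b) (tens a' b')) Z.
    apply: (@tens_ext _ _ _ _ (fun Z => mu (tens a b) (mu (tens a' b') Z))
                               (fun Z => mu (mu (tens a b) (tens a' b')) Z)) => //.
    by move=> c u v /=; rewrite !muDr !muZr.
  have H1 a b Y Z : mu (tens a b) (mu Y Z) = mu (mu (tens a b) Y) Z.
    apply: (@tens_ext _ _ _ _ (fun Y => mu (tens a b) (mu Y Z))
                               (fun Y => mu (mu (tens a b) Y) Z)) => [||a' b'] //.
    - by move=> c u v /=; rewrite !muDl !muZl !muDr !muZr.
    - by move=> c u v /=; rewrite !muDr !muZr !muDl !muZl.
  move=> X Y Z.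
  apply: (@tens_ext _ _ _ _ (fun X => mu X (mu Y Z))
                             (fun X => mu (mu X Y) Z)) => //.
  by move=> c u v /=; rewrite !muDl !muZl.
have b11 : b1 1 = 1 by apply: daddv_pi_id.
have a11 : a1 1 = 1 by apply: daddv_pi_id.
split.
  move=> X; apply: (@tens_ext _ _ _ _ (mu (tens 1 1)) id); [exact: muR | by move=> c u v | move=> a b].
  rewrite /= muT /m !mul1r b11 b2E b11 subrr mul0r tens0r addr0 mul1r //.
move=> X; apply: (@tens_ext _ _ _ _ (mu ^~ (tens 1 1)) id); [exact: muL | by move=> c u v | move=> a b].
by rewrite /= muT /m !mulr1 a11 mulr1 -tensDr b12.
Qed.
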